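(* If $L_1, L_2 \subseteq \Sigma^*$ are regular languages, then $L_1 \stackrel{\rm pgi}{\leftarrow} L_2$ and $L_1 \stackrel{\rm sgi}{\leftarrow} L_2$ are regular.
   Context: Prefix-guided insertion of a string $y$ into a string $x$: $x \stackrel{\rm pgi}{\leftarrow} y = \{ x_1 y_1 y_2 x_2 \mid x = x_1 y_1 x_2,\ y = y_1 y_2,\ y_1 \neq \varepsilon \}$. Suffix-guided insertion: $x \stackrel{\rm sgi}{\leftarrow} y = \{ x_1 y_1 y_2 x_2 \mid x = x_1 y_2 x_2,\ y = y_1 y_2,\ y_2 \neq \varepsilon \}$. Both are extended to languages by taking the union over all $x \in L_1$, $y \in L_2$. *)

(* Defs.v *)
From mathcomp Require Import all_boot.
Set Implicit Arguments. Unset Strict Implicit. Unset Printing Implicit Defensive.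

Definition word (Sigma : finType) := seq Sigma.
Definition lang (Sigma : finType) := word Sigma -> Prop.

Record dfa (Sigma : finType) := DFA {
  dfa_state : finType;
  dfa_start : dfa_state;
  dfa_final : {pred dfa_state};
  dfa_trans : dfa_state -> Sigma -> dfa_state
}.
Arguments dfa_state {Sigma} _.
Arguments dfa_start {Sigma} _.
Arguments dfa_final {Sigma} _.
Arguments dfa_trans {Sigma} _ _ _.

Definition dfa_run (Sigma : finType) (M : dfa Sigma) (q : dfa_state M) (w : word Sigma)
  : dfa_state M := foldl (dfa_trans M) q w.

Definition dfa_accepts (Sigma : finType) (M : dfa Sigma) (w : word Sigma) : bool :=
  dfa_final M (dfa_run (dfa_start M) w).

Definition regular (Sigma : finType) (L : lang Sigma) : Prop :=
  exists M : dfa Sigma, forall w, L w <-> dfa_accepts M w.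

Definition pgi (Sigma : finType) (L1 L2 : lang Sigma) : lang Sigma :=
  fun w => exists x y x1 x2 y1 y2 : word Sigma,
    L1 x /\ L2 y /\ [/\ x = x1 ++ y1 ++ x2, y = y1 ++ y2, y1 <> [::]
      & w = x1 ++ y1 ++ y2 ++ x2].

Definition sgi (Sigma : finType) (L1 L2 : lang Sigma) : lang Sigma :=
  fun w => exists x y x1 x2 y1 y2 : word Sigma,
    L1 x /\ L2 y /\ [/\ x = x1 ++ y2 ++ x2, y = y1 ++ y2, y2 <> [::]
      & w = x1 ++ y1 ++ y2 ++ x2].

(* Main.v *)
Require Import Defs.
From mathcomp Require Import all_boot.
Set Implicit Arguments. Unset Strict Implicit. Unset Printing Implicit Defensive.

Section NFA.
Variable Sigma : finType.
Variable S : finType.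
Variable step : S -> Sigma -> S -> bool.
Definition ntrans (X : {set S}) (a : Sigma) : {set S} :=
  [set t | [exists s in X, step s a t]].
Definition nR X (w : word Sigma) := foldl ntrans X w.
Lemma nfa_regular (s0 : S) (fin : pred S) (L : lang Sigma) :
  (forall w, L w <-> exists2 t, t \in nR [set s0] w & fin t) -> regular L.
Proof.
move=> H; exists (@DFA Sigma {set S} [set s0] [pred X : {set S} | [exists t in X, fin t]] ntrans).
move=> w; rewrite /dfa_accepts /dfa_run /=; split.
- case/H=> t Ht Ft; apply/existsP; exists t; by rewrite Ht.
- by case/existsP=> t /andP[Ht Ft]; apply/H; exists t.
Qed.
Lemma ntransP (X : {set S}) a s t : s \in X -> step s a t -> t \in ntrans X a.
Proof. move=> Hs Hst; rewrite inE; apply/existsP; exists s; by rewrite Hs. Qed.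
Lemma ntransE (X : {set S}) a t : t \in ntrans X a -> exists2 s, s \in X & step s a t.
Proof. rewrite inE => /existsP[s /andP[]]; by exists s. Qed.
Lemma nR_cat (X : {set S}) u v : nR X (u ++ v) = nR (nR X u) v.
Proof. by rewrite /nR foldl_cat. Qed.
Lemma nR_rcons (X : {set S}) u a : nR X (rcons u a) = ntrans (nR X u) a.
Proof. by rewrite /nR foldl_rcons. Qed.
End NFA.

Lemma run_cat (Sigma : finType) (M : dfa Sigma) (p : dfa_state M) u v :
  dfa_run p (u ++ v) = dfa_run (dfa_run p u) v.
Proof. by rewrite /dfa_run foldl_cat. Qed.
Lemma run_rcons (Sigma : finType) (M : dfa Sigma) (p : dfa_state M) u a :
  dfa_run p (rcons u a) = dfa_trans M (dfa_run p u) a.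
Proof. by rewrite /dfa_run foldl_rcons. Qed.

Section Constr.
Variable Sigma : finType.
Variables M1 M2 : dfa Sigma.
Local Notation Q1 := (dfa_state M1).
Local Notation Q2 := (dfa_state M2).
Local Notation d1 := (dfa_trans M1).
Local Notation d2 := (dfa_trans M2).
Local Notation F1 := (dfa_final M1).
Local Notation F2 := (dfa_final M2).
Local Notation s2 := (dfa_start M2).
Definition r1 w := dfa_run (dfa_start M1) w.
Definition r2 w := dfa_run (dfa_start M2) w.
Definition St : finType := ((Q1 + (Q1 * Q2)) + ((Q1 * Q2) + Q1))%type.
Definition P0 p : St := inl (inl p).
Definition P1 p q : St := inl (inr (p, q)).
Definition P2 p q : St := inr (inl (p, q)).
Definition P3 p : St := inr (inr p).

Definition pstep (s : St) (a : Sigma) (t : St) : bool :=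
  match s with
  | inl (inl p) => (t == P0 (d1 p a)) || (t == P1 (d1 p a) (d2 s2 a))
  | inl (inr (p, q)) => [|| t == P1 (d1 p a) (d2 q a), t == P2 p (d2 q a)
                          | F2 q && (t == P3 (d1 p a))]
  | inr (inl (p, q)) => (t == P2 p (d2 q a)) || F2 q && (t == P3 (d1 p a))
  | inr (inr p) => t == P3 (d1 p a)
  end.

Definition pinv (w : word Sigma) (s : St) : Prop :=
  match s with
  | inl (inl p) => p = r1 w
  | inl (inr (p, q)) => exists x1 y1, [/\ w = x1 ++ y1, y1 <> [::], p = r1 w & q = r2 y1]
  | inr (inl (p, q)) => exists x1 y1 y2,
      [/\ w = x1 ++ y1 ++ y2, y1 <> [::], p = r1 (x1 ++ y1) & q = r2 (y1 ++ y2)]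
  | inr (inr p) => exists x1 y1 y2 x2,
      [/\ w = x1 ++ y1 ++ y2 ++ x2, y1 <> [::], F2 (r2 (y1 ++ y2)) & p = r1 (x1 ++ y1 ++ x2)]
  end.

Lemma pinvP w t : t \in nR pstep [set P0 (dfa_start M1)] w -> pinv w t.
Proof.
elim/last_ind: w t => [|w a IH] t.
  by rewrite /nR /= inE => /eqP ->.
rewrite nR_rcons => /ntransE [s Hs Hst]; have := IH _ Hs.
case: s Hst {Hs} => [[p|[p q]]|[[p q]|p]] /=.
- case/orP=> /eqP -> ->.
    by rewrite /= /r1 run_rcons.
  exists w, [:: a]; split => //; by rewrite ?cats1 // /r1 run_rcons.
- case/or3P => [/eqP->|/eqP->|/andP[Fq /eqP->]] [x1 [y1 [Ew Ny Ep Eq]]]; subst p q => /=.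
  + exists x1, (rcons y1 a); split.
    * by rewrite Ew rcons_cat.
    * by case: (y1).
    * by rewrite /r1 run_rcons.
    * by rewrite /r2 run_rcons.
  + exists x1, y1, [:: a]; split => //.
    * by rewrite Ew -cats1 catA.
    * by rewrite Ew.
    * by rewrite cats1 /r2 run_rcons.
  + exists x1, y1, [::], [:: a]; split => //.
    * by rewrite Ew /= -cats1 catA.
    * by rewrite cats0.
    * by rewrite /r1 catA -Ew cats1 run_rcons.
- case/orP => [/eqP->|/andP[Fq /eqP->]] [x1 [y1 [y2 [Ew Ny Ep Eq]]]]; subst p q => /=.
  + exists x1, y1, (rcons y2 a); split => //.
    * by rewrite Ew -!cats1 -!catA.
    * by rewrite -rcons_cat /r2 run_rcons.
  + exists x1, y1, y2, [:: a]; split => //.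
    by rewrite Ew -!cats1 -!catA.
    by rewrite /r1 catA cats1 run_rcons.
- move=> /eqP-> [x1 [y1 [y2 [x2 [Ew Ny F ->]]]]] /=.
  exists x1, y1, y2, (rcons x2 a); split => //.
    by rewrite Ew -!cats1 -!catA.
  by rewrite /r1 -!rcons_cat run_rcons.
Qed.

Definition pfin (s : St) : bool :=
  match s with
  | inl (inl _) => false
  | inl (inr (p, q)) => F1 p && F2 q
  | inr (inl (p, q)) => F1 p && F2 q
  | inr (inr p) => F1 p
  end.

Lemma loop0 (X : {set St}) p u : P0 p \in X -> P0 (dfa_run p u) \in nR pstep X u.
Proof. elim: u p X => //= b u IH p X H; apply: IH; apply: ntransP H _; by rewrite /= eqxx. Qed.
Lemma loop1 (X : {set St}) p q u : P1 p q \in X ->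
  P1 (dfa_run p u) (dfa_run q u) \in nR pstep X u.
Proof. elim: u p q X => //= b u IH p q X H; apply: IH; apply: ntransP H _; by rewrite /= eqxx. Qed.
Lemma loop2 (X : {set St}) p q u : P2 p q \in X ->
  P2 p (dfa_run q u) \in nR pstep X u.
Proof. elim: u p q X => //= b u IH p q X H; apply: IH; apply: ntransP H _; by rewrite /= eqxx. Qed.
Lemma loop3 (X : {set St}) p u : P3 p \in X -> P3 (dfa_run p u) \in nR pstep X u.
Proof. elim: u p X => //= b u IH p X H; apply: IH; apply: ntransP H _; by rewrite /= eqxx. Qed.

Lemma pgi_nfa (L1 L2 : lang Sigma) :
  (forall w, L1 w <-> dfa_accepts M1 w) -> (forall w, L2 w <-> dfa_accepts M2 w) ->
  forall w, pgi L1 L2 w <-> exists2 t, t \in nR pstep [set P0 (dfa_start M1)] w & pfin t.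
Proof.
move=> H1 H2 w; split.
- case=> x [y [x1 [x2 [y1 [y2 [/H1 Hx [/H2 Hy [Ex Ey Ny Ew]]]]]]]].
  move: Hx Hy; rewrite /dfa_accepts Ex Ey => Hx Hy; subst w; clear Ex Ey.
  case: y1 Ny Hx Hy => [//|a y1] _ Hx Hy.
  set X := [set P0 _].
  have h0 : P0 (r1 x1) \in nR pstep X x1 by apply: loop0; rewrite inE.
  have h1 : P1 (r1 (x1 ++ a :: y1)) (r2 (a :: y1)) \in nR pstep X (x1 ++ a :: y1).
    rewrite nR_cat /r1 run_cat; apply: (loop1 y1); apply: ntransP h0 _; by rewrite /= /r1 /r2 ?eqxx ?orbT.
  case: y2 Hy Hx => [|b y2] Hy Hx.
    case: x2 Hx => [|c x2] Hx.
      exists (P1 (r1 (x1 ++ a :: y1)) (r2 (a :: y1))); first by rewrite /= !cats0.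
      by rewrite /= -/(r1 _) -/(r2 _) !cats0 in Hx Hy *; rewrite Hx Hy.
    exists (P3 (dfa_run (d1 (r1 (x1 ++ a :: y1)) c) x2)).
      rewrite cat0s catA nR_cat; apply: (loop3 x2); apply: ntransP h1 _.
      by rewrite cats0 in Hy; rewrite /= /r1 /r2 ?eqxx ?Hy ?orbT.
    by rewrite catA run_cat in Hx; exact: Hx.
  have h2 : P2 (r1 (x1 ++ a :: y1)) (r2 ((a :: y1) ++ b :: y2)) \in
     nR pstep X ((x1 ++ a :: y1) ++ b :: y2).
    rewrite nR_cat /r2 run_cat; apply: (loop2 y2); apply: ntransP h1 _; by rewrite /= /r1 /r2 ?eqxx ?orbT.
  case: x2 Hx => [|c x2] Hx.
    exists (P2 (r1 (x1 ++ a :: y1)) (r2 ((a :: y1) ++ b :: y2))).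
      by rewrite cats0 catA.
    rewrite cats0 in Hx; apply/andP; split; [exact: Hx | exact: Hy].
  exists (P3 (dfa_run (d1 (r1 (x1 ++ a :: y1)) c) x2)).
    rewrite catA catA nR_cat; apply: (loop3 x2); apply: ntransP h2 _.
    by rewrite /= /r1 /r2 ?eqxx ?Hy ?orbT.
  by rewrite catA run_cat in Hx; exact: Hx.
- case=> t /pinvP; case: t => [[p|[p q]]|[[p q]|p]] //=.
  + case=> x1 [y1 [-> Ny -> ->]] /andP[F G].
    exists (x1 ++ y1), y1, x1, [::], y1, [::]; split; [apply/H1 | split; [apply/H2|split]].
    all: rewrite /dfa_accepts ?cats0 /=; try solve [done | exact F | exact G].
  + case=> x1 [y1 [y2 [-> Ny -> ->]]] /andP[F G].
    exists (x1 ++ y1), (y1 ++ y2), x1, [::], y1, y2; split; [apply/H1 | split; [apply/H2|split]].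
    all: rewrite /dfa_accepts ?cats0 /=; try solve [done | exact F | exact G].
  + case=> x1 [y1 [y2 [x2 [-> Ny G ->]]]] F.
    exists (x1 ++ y1 ++ x2), (y1 ++ y2), x1, x2, y1, y2; split; [apply/H1 | split; [apply/H2|split]].
    all: rewrite /dfa_accepts /=; try solve [done | exact F | exact G].
Qed.
Definition sstep (s : St) (a : Sigma) (t : St) : bool :=
  match s with
  | inl (inl p) => [|| t == P0 (d1 p a), t == P1 p (d2 s2 a) | t == P2 (d1 p a) (d2 s2 a)]
  | inl (inr (p, q)) => (t == P1 p (d2 q a)) || (t == P2 (d1 p a) (d2 q a))
  | inr (inl (p, q)) => (t == P2 (d1 p a) (d2 q a)) || F2 q && (t == P3 (d1 p a))
  | inr (inr p) => t == P3 (d1 p a)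
  end.

Definition sinv (w : word Sigma) (s : St) : Prop :=
  match s with
  | inl (inl p) => p = r1 w
  | inl (inr (p, q)) => exists x1 y1, [/\ w = x1 ++ y1, p = r1 x1 & q = r2 y1]
  | inr (inl (p, q)) => exists x1 y1 y2,
      [/\ w = x1 ++ y1 ++ y2, y2 <> [::], p = r1 (x1 ++ y2) & q = r2 (y1 ++ y2)]
  | inr (inr p) => exists x1 y1 y2 x2,
      [/\ w = x1 ++ y1 ++ y2 ++ x2, y2 <> [::], F2 (r2 (y1 ++ y2)) & p = r1 (x1 ++ y2 ++ x2)]
  end.

Lemma sinvP w t : t \in nR sstep [set P0 (dfa_start M1)] w -> sinv w t.
Proof.
elim/last_ind: w t => [|w a IH] t.
  by rewrite /nR /= inE => /eqP ->.
rewrite nR_rcons => /ntransE [s Hs Hst]; have := IH _ Hs.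
case: s Hst {Hs} => [[p|[p q]]|[[p q]|p]] /=.
- case/or3P=> /eqP -> ->.
  + by rewrite /= /r1 run_rcons.
  + by exists w, [:: a]; split => //; rewrite cats1.
  + exists w, [::], [:: a]; split => //.
    * by rewrite /= cats1.
    * by rewrite /r1 cats1 run_rcons.
- case/orP => [/eqP->|/eqP->] [x1 [y1 [Ew Ep Eq]]]; subst p q => /=.
  + exists x1, (rcons y1 a); split.
    * by rewrite Ew rcons_cat.
    * by [].
    * by rewrite /r2 run_rcons.
  + exists x1, y1, [:: a]; split => //.
    * by rewrite Ew -cats1 catA.
    * by rewrite /r1 cats1 run_rcons.
    * by rewrite /r2 cats1 run_rcons.
- case/orP => [/eqP->|/andP[Fq /eqP->]] [x1 [y1 [y2 [Ew Ny Ep Eq]]]]; subst p q => /=.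
  + exists x1, y1, (rcons y2 a); split => //.
    * by rewrite Ew -!cats1 -!catA.
    * by case: (y2).
    * by rewrite -rcons_cat /r1 run_rcons.
    * by rewrite -rcons_cat /r2 run_rcons.
  + exists x1, y1, y2, [:: a]; split => //.
    * by rewrite Ew -!cats1 -!catA.
    * by rewrite /r1 catA cats1 run_rcons.
- move=> /eqP-> [x1 [y1 [y2 [x2 [Ew Ny F ->]]]]] /=.
  exists x1, y1, y2, (rcons x2 a); split => //.
    by rewrite Ew -!cats1 -!catA.
  by rewrite /r1 -!rcons_cat run_rcons.
Qed.

Definition sfin (s : St) : bool :=
  match s with
  | inr (inl (p, q)) => F1 p && F2 q
  | inr (inr p) => F1 p
  | _ => false
  end.

Lemma sloop0 (X : {set St}) p u : P0 p \in X -> P0 (dfa_run p u) \in nR sstep X u.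
Proof. elim: u p X => //= b u IH p X H; apply: IH; apply: ntransP H _; by rewrite /= eqxx. Qed.
Lemma sloop1 (X : {set St}) p q u : P1 p q \in X ->
  P1 p (dfa_run q u) \in nR sstep X u.
Proof. elim: u p q X => //= b u IH p q X H; apply: IH; apply: ntransP H _; by rewrite /= eqxx. Qed.
Lemma sloop2 (X : {set St}) p q u : P2 p q \in X ->
  P2 (dfa_run p u) (dfa_run q u) \in nR sstep X u.
Proof. elim: u p q X => //= b u IH p q X H; apply: IH; apply: ntransP H _; by rewrite /= eqxx. Qed.
Lemma sloop3 (X : {set St}) p u : P3 p \in X -> P3 (dfa_run p u) \in nR sstep X u.
Proof. elim: u p X => //= b u IH p X H; apply: IH; apply: ntransP H _; by rewrite /= eqxx. Qed.

Lemma sgi_nfa (L1 L2 : lang Sigma) :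
  (forall w, L1 w <-> dfa_accepts M1 w) -> (forall w, L2 w <-> dfa_accepts M2 w) ->
  forall w, sgi L1 L2 w <-> exists2 t, t \in nR sstep [set P0 (dfa_start M1)] w & sfin t.
Proof.
move=> H1 H2 w; split.
- case=> x [y [x1 [x2 [y1 [y2 [/H1 Hx [/H2 Hy [Ex Ey Ny Ew]]]]]]]].
  move: Hx Hy; rewrite /dfa_accepts Ex Ey => Hx Hy; subst w; clear Ex Ey.
  case: y2 Ny Hx Hy => [//|a y2] _ Hx Hy.
  set X := [set P0 _].
  have h0 : P0 (r1 x1) \in nR sstep X x1 by apply: sloop0; rewrite inE.
  have h1 : P2 (r1 (x1 ++ a :: y2)) (r2 (y1 ++ a :: y2)) \in nR sstep X (x1 ++ y1 ++ a :: y2).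
    case: y1 {Hy} => [|b y1].
      rewrite cat0s nR_cat /r1 run_cat; apply: (sloop2 y2); apply: ntransP h0 _.
      by rewrite /= /r1 /r2 ?eqxx ?orbT.
    have hm : P1 (r1 x1) (r2 (b :: y1)) \in nR sstep X (x1 ++ b :: y1).
      rewrite nR_cat; apply: (sloop1 y1); apply: ntransP h0 _.
      by rewrite /= /r1 /r2 ?eqxx ?orbT.
    rewrite catA nR_cat /r1 /r2 !run_cat; apply: (sloop2 y2); apply: ntransP hm _.
    by rewrite /= /r1 /r2 ?eqxx ?orbT.
  case: x2 Hx => [|c x2] Hx.
    exists (P2 (r1 (x1 ++ a :: y2)) (r2 (y1 ++ a :: y2))); first by rewrite cats0.
    rewrite cats0 in Hx; apply/andP; split; [exact: Hx | exact: Hy].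
  exists (P3 (dfa_run (d1 (r1 (x1 ++ a :: y2)) c) x2)).
    have -> : x1 ++ y1 ++ (a :: y2) ++ c :: x2 = (x1 ++ y1 ++ a :: y2) ++ c :: x2
      by rewrite !catA.
    rewrite nR_cat; apply: (sloop3 x2); apply: ntransP h1 _.
    by rewrite /= /r1 /r2 -?/(r2 _) ?eqxx ?Hy ?orbT.
  by rewrite catA run_cat in Hx; exact: Hx.
- case=> t /sinvP; case: t => [[p|[p q]]|[[p q]|p]] //=.
  + case=> x1 [y1 [y2 [-> Ny -> ->]]] /andP[F G].
    exists (x1 ++ y2), (y1 ++ y2), x1, [::], y1, y2; split; [apply/H1 | split; [apply/H2|split]].
    all: rewrite /dfa_accepts ?cats0 /=; try solve [done | exact F | exact G].
  + case=> x1 [y1 [y2 [x2 [-> Ny G ->]]]] F.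
    exists (x1 ++ y2 ++ x2), (y1 ++ y2), x1, x2, y1, y2; split; [apply/H1 | split; [apply/H2|split]].
    all: rewrite /dfa_accepts /=; try solve [done | exact F | exact G].
Qed.
End Constr.

Theorem proposition4p3 (Sigma : finType) (L1 L2 : lang Sigma) :
  regular L1 -> regular L2 -> regular (pgi L1 L2) /\ regular (sgi L1 L2).
Proof.
case=> M1 HM1 [M2 HM2]; split.
- exact: nfa_regular (pgi_nfa HM1 HM2).
- exact: nfa_regular (sgi_nfa HM1 HM2).
Qed.
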